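(* Let $\mathcal V$ be a finite-dimensional vector space over $\mathbb K\in\{\mathbb R,\mathbb C\}$ with norm $\|\cdot\|$, dual space $\mathcal V^\star$, dual norm $\|\cdot\|_\star$, and $\mathrm d_\star(x,y)=\frac12\|x-y\|_\star$. Let $\epsilon,\tau>0$, $z\in\mathcal V^\star$ and $\mu$ a probability measure over $\mathcal V^\star$. Then for every $x\in\mathcal V^\star$, $$\Pr_{y\sim\mu}[\mathrm d_\star(x,y)<\epsilon]\le\max\left\{\mathrm{frac}(\mu,z,\tau),\ \Pr_{y\sim\mu}\left[\mathrm d_\star(y,z)<2\epsilon+\tfrac\tau2\right]\right\},$$ where $\mathrm{frac}(\mu,z,\tau)=\sup_{v\in\overline B_1(0)}\Pr_{y\sim\mu}[|y(v)-z(v)|>\tau]$.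
   Context: $\overline B_1(0)=\{v\in\mathcal V:\|v\|\le1\}$ and $\|x\|_\star=\sup_{\|v\|\le1}|x(v)|$; elements of $\mathcal V^\star$ are evaluated on vectors $v\in\mathcal V$ as linear functionals. *)

(* Defs.v *)
From HB Require Import structures.
From mathcomp Require Import all_boot all_order all_algebra.
From mathcomp Require Import all_classical all_reals all_analysis.
From mathcomp Require Import complex.
Set Implicit Arguments.
Unset Strict Implicit.
Unset Printing Implicit Defensive.
Import Order.TTheory GRing.Theory Num.Theory.
Local Open Scope classical_set_scope.
Local Open Scope ring_scope.

(* Setting: V is an n-dimensional vector space over K, modelled as 'rV[K]_n
   (every finite-dimensional K-space is isomorphic to some K^n, and the norm
   on V is arbitrary).  absK : K -> R is the modulus of the scalar field
   (instantiated by `|.| for K = R and by normc for K = C). *)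

Section DualSetting.
Variables (R : realType) (K : pzRingType) (absK : K -> R) (n : nat).

Definition is_norm (N : 'rV[K]_n -> R) : Prop :=
  [/\ forall v, N v = 0 -> v = 0,
      forall (a : K) v, N (a *: v) = absK a * N v &
      forall u v, N (u + v) <= N u + N v].

Definition is_functional (f : 'rV[K]_n -> K) : Prop :=
  forall (a : K) u v, f (a *: u + v) = a * f u + f v.

Lemma functional0 : is_functional (fun _ => 0).
Proof. by move=> a u v; rewrite mulr0 addr0. Qed.

Definition dual := {f : 'rV[K]_n -> K | is_functional f}.

HB.instance Definition _ := gen_eqMixin dual.
HB.instance Definition _ := gen_choiceMixin dual.
HB.instance Definition _ := isPointed.Build dual (exist _ _ functional0).

Definition ev (x : dual) (v : 'rV[K]_n) : K := proj1_sig x v.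

Variable N : 'rV[K]_n -> R.

Definition unit_ball : set 'rV[K]_n := [set v | N v <= 1].

Definition dual_norm_diff (x y : dual) : R :=
  sup [set absK (ev x v - ev y v) | v in unit_ball].

Definition dstar (x y : dual) : R := dual_norm_diff x y / 2.

Definition dual_open (A : set dual) : Prop :=
  forall x, A x -> exists2 r : R, 0 < r &
    forall y, dual_norm_diff x y < r -> A y.

Definition dualBorel := g_sigma_algebraType dual_open.

Definition frac (mu : probability dualBorel R) (z : dual) (tau : R) : \bar R :=
  ereal_sup [set mu [set y : dualBorel | tau < absK (ev y v - ev z v)]
            | v in unit_ball].

End DualSetting.

Definition claim (R : realType) (K : pzRingType) (absK : K -> R) (n : nat) : Prop :=
  forall (N : 'rV[K]_n -> R), is_norm absK N ->
  forall (eps tau : R), 0 < eps -> 0 < tau ->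
  forall (z : dual K n) (mu : probability (dualBorel absK N) R) (x : dual K n),
    (mu [set y : dualBorel absK N | (dstar absK N x y < eps)%R]
      <= maxe (frac mu z tau)
              (mu [set y : dualBorel absK N |
                     (dstar absK N y z < 2 * eps + tau / 2)%R]))%E.

(* Main.v *)
Require Import Defs.
From HB Require Import structures.
From mathcomp Require Import all_boot all_order all_algebra.
From mathcomp Require Import all_classical all_reals all_analysis.
From mathcomp Require Import complex.
From mathcomp Require Import lra.
Import Order.TTheory GRing.Theory Num.Theory.
Local Open Scope classical_set_scope.
Local Open Scope ring_scope.

Section Generic.
Variables (R : realType) (K : pzRingType) (absK : K -> R) (n : nat).
Hypothesis absKM : forall a b, absK (a * b) = absK a * absK b.
Hypothesis absKD : forall a b, absK (a + b) <= absK a + absK b.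
Hypothesis absKN : forall a, absK (- a) = absK a.
Hypothesis absK0 : absK 0 = 0.
Hypothesis absK1 : absK 1 = 1.
Variable N : 'rV[K]_n -> R.
Hypothesis Nnorm : is_norm absK N.
Hypothesis coordb : exists2 c, 0 < c & forall (v : 'rV[K]_n) i, c * absK (v ord0 i) <= N v.

Lemma N0 : N 0 = 0.
Proof. by case: Nnorm => _ NZ _; rewrite -(scale0r (0 : 'rV[K]_n)) NZ absK0 mul0r. Qed.

Lemma NN v : N (- v) = N v.
Proof. by case: Nnorm => _ NZ _; rewrite -scaleN1r NZ absKN absK1 mul1r. Qed.

Lemma N_ge0 v : 0 <= N v.
Proof.
case: Nnorm => _ NZ ND.
have : N 0 <= N v + N (- v) by rewrite -(subrr v) ND.
rewrite N0 NN; lra.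
Qed.

Lemma absK_ge0 a : 0 <= absK a.
Proof.
have : absK 0 <= absK a + absK (- a) by rewrite -(subrr a) absKD.
rewrite absK0 absKN; lra.
Qed.

Lemma absK_sum (I : Type) (r : seq I) (F : I -> K) :
  absK (\sum_(i <- r) F i) <= \sum_(i <- r) absK (F i).
Proof.
elim/big_rec2: _ => [|i y1 y2 _ H]; first by rewrite absK0.
by apply: le_trans (absKD _ _) _; rewrite lerD2l.
Qed.

Lemma fun_lin (f : dual K n) :
  [/\ ev f 0 = 0, forall u v, ev f (u + v) = ev f u + ev f v &
      forall a u, ev f (a *: u) = a * ev f u].
Proof.
case: f => f Hf; rewrite /ev /=.
have f0 : f 0 = 0.
  by have := Hf 1 0 0; rewrite scale1r addr0 mul1r => /(congr1 (fun t => t - f 0)); rewrite addrK subrr.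
split => //; first by move=> u v; rewrite -[u]scale1r Hf mul1r scale1r.
by move=> a u; rewrite -[a *: u]addr0 Hf f0 addr0.
Qed.

Lemma fun_bound (f : dual K n) : exists B, forall v, absK (ev f v) <= B * N v.
Proof.
case: coordb => c c0 Hc.
case: (fun_lin f) => f0 fD fZ.
exists ((\sum_(i < n) absK (ev f (delta_mx 0 i))) / c) => v.
rewrite {1}(row_sum_delta v).
have -> : ev f (\sum_(j < n) v 0 j *: delta_mx 0 j) = \sum_(j < n) (v 0 j * ev f (delta_mx 0 j)).
  by elim/big_rec2: _ => [|j y1 y2 _ <-]; rewrite ?f0 // fD fZ.
apply: le_trans (absK_sum _ _ _) _.
rewrite mulrAC mulr_suml mulr_suml; apply: ler_sum => j _.
rewrite absKM mulrC -mulrA ler_wpM2l ?absK_ge0 // ler_pdivlMr // mulrC.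
exact: Hc.
Qed.


Local Notation D := (dual_norm_diff absK N).
Local Notation SS x y := [set absK (ev x v - ev y v) | v in unit_ball N].

Lemma SS_has_sup (x y : dual K n) : has_sup (SS x y).
Proof.
split.
  exists (absK (ev x 0 - ev y 0)); exists 0 => //.
  by rewrite /unit_ball /= N0 ler01.
case: (fun_bound x) => Bx hx; case: (fun_bound y) => By hy.
exists (`|Bx| + `|By|) => _ [v Hv <-].
apply: le_trans (absKD _ _) _; rewrite absKN.
rewrite /unit_ball /= in Hv.
have n0 := N_ge0 v.
apply: lerD.
  apply: le_trans (hx v) _; apply: le_trans (ler_wpM2r n0 (ler_norm Bx)) _.
  by rewrite -[leRHS]mulr1 ler_wpM2l.
apply: le_trans (hy v) _; apply: le_trans (ler_wpM2r n0 (ler_norm By)) _.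
by rewrite -[leRHS]mulr1 ler_wpM2l.
Qed.

Lemma D_ub x y v : unit_ball N v -> absK (ev x v - ev y v) <= D x y.
Proof. by move=> Hv; apply: sup_upper_bound (SS_has_sup x y) _ _; exists v. Qed.

Lemma D_le x y r : (forall v, unit_ball N v -> absK (ev x v - ev y v) <= r) -> D x y <= r.
Proof.
move=> H; apply: ge_sup; first by case: (SS_has_sup x y).
by move=> _ [v Hv <-]; exact: H.
Qed.

Lemma D_adh x y e : 0 < e -> exists2 v, unit_ball N v & D x y - e < absK (ev x v - ev y v).
Proof.
move=> e0; have [_ [v Hv <-] H] := sup_adherent e0 (SS_has_sup x y).
by exists v.
Qed.

Lemma D_sym x y : D x y = D y x.
Proof.
apply/eqP; rewrite eq_le; apply/andP; split; apply: D_le => v Hv;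
  by rewrite -absKN opprB D_ub.
Qed.

Lemma D_tri x y z : D x z <= D x y + D y z.
Proof.
apply: D_le => v Hv.
have -> : ev x v - ev z v = (ev x v - ev y v) + (ev y v - ev z v) by rewrite addrA subrK.
by apply: le_trans (absKD _ _) _; apply: lerD; apply: D_ub.
Qed.

Lemma open_meas (A : set (dualBorel absK N)) : dual_open absK N A -> measurable A.
Proof. by move=> H; apply: sub_sigma_algebra. Qed.

Lemma ball_meas x r : measurable [set y : dualBorel absK N | D x y < r].
Proof.
apply: open_meas => y /= Hy; exists (r - D x y); first by rewrite subr_gt0.
move=> y' Hy'; apply: le_lt_trans (D_tri x y y') _; rewrite -ltrBrDl //.
Qed.

Lemma ball_meas' z r : measurable [set y : dualBorel absK N | D y z < r].
Proof.
apply: open_meas => y /= Hy; exists (r - D y z); first by rewrite subr_gt0.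
move=> y' Hy'; apply: le_lt_trans (D_tri y' y z) _; rewrite D_sym -ltrBrDr //.
Qed.

Lemma B_meas z v tau : unit_ball N v ->
  measurable [set y : dualBorel absK N | tau < absK (ev y v - ev z v)].
Proof.
move=> Hv; apply: open_meas => y /= Hy; exists (absK (ev y v - ev z v) - tau).
  by rewrite subr_gt0.
move=> y' Hy'.
have : absK (ev y v - ev z v) <= absK (ev y v - ev y' v) + absK (ev y' v - ev z v).
  by apply: le_trans (absKD _ _); rewrite addrA subrK.
have := @D_ub y y' v Hv.
move: Hy'; set a := absK _; set b := absK _; set c := absK _; set d := D y y'.
lra.
Qed.


Lemma main_gen (eps tau : R) : 0 < eps -> 0 < tau ->
  forall (z : dual K n) (mu : probability (dualBorel absK N) R) (x : dual K n),
    (mu [set y : dualBorel absK N | (dstar absK N x y < eps)%R]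
      <= maxe (Defs.frac mu z tau)
              (mu [set y : dualBorel absK N |
                     (dstar absK N y z < 2 * eps + tau / 2)%R]))%E.
Proof.
move=> eps0 tau0 z mu x.
have EA : [set y : dualBorel absK N | (dstar absK N x y < eps)%R] =
          [set y : dualBorel absK N | D x y < eps * 2].
  by apply/funext => y; apply/propext; rewrite /dstar /= ltr_pdivrMr.
have EC : [set y : dualBorel absK N | (dstar absK N y z < 2 * eps + tau / 2)%R] =
          [set y : dualBorel absK N | D y z < (2 * eps + tau / 2) * 2].
  by apply/funext => y; apply/propext; rewrite /dstar /= ltr_pdivrMr.
rewrite EA EC.
have [Hxz|Hxz] := ltP (D x z) (2 * eps + tau).
  rewrite le_max; apply/orP; right.
  apply: le_measure; rewrite ?inE; [exact: ball_meas|exact: ball_meas'|].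
  move=> y /= Hy; apply: le_lt_trans (D_tri y x z) _; rewrite D_sym.
  lra.
rewrite le_max; apply/orP; left.
pose F (k : nat) := [set y : dualBorel absK N | D x y < eps * 2 - k.+1%:R^-1].
have FA : \bigcup_k F k = [set y : dualBorel absK N | D x y < eps * 2].
  apply/seteqP; split => y /=.
    move=> [k _ /= Hk]; apply: lt_le_trans Hk _.
    by rewrite lerBlDr lerDl invr_ge0.
  move=> /ltr_add_invr [k Hk]; by exists k => //=; rewrite /F /= ltrBrDr.
have mF k : measurable (F k) by exact: ball_meas.
have ndF : nondecreasing_seq F.
  move=> a b ab; apply/subsetPset => y /= Hy; apply: lt_le_trans Hy _; rewrite lerD2l lerN2.
  by rewrite lef_pV2 ?posrE ?ltr0n // ler_nat.
rewrite -FA.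
apply: (cvge_to_le (nondecreasing_cvg_mu mF _ ndF)); first by rewrite FA; exact: ball_meas.
apply: nearW => k /=.
have e0 : (0 : R) < k.+1%:R^-1 by rewrite invr_gt0 ltr0n.
have [v Hv Hlt] := @D_adh x z _ e0.
apply: (@le_trans _ _ (mu [set y : dualBorel absK N | tau < absK (ev y v - ev z v)])).
  apply: le_measure; rewrite ?inE; [exact: mF|exact: B_meas|].
  move=> y; rewrite /F /= => Hy.
  have : absK (ev x v - ev z v) <= absK (ev x v - ev y v) + absK (ev y v - ev z v).
    by apply: le_trans (absKD _ _); rewrite addrA subrK.
  have := @D_ub x y v Hv.
  move: Hy Hlt Hxz; set a := absK _; set b := absK _; set c := absK _.
  set d := D x y; set e := D x z; set i := _^-1.
  lra.
apply: ereal_sup_ubound; exists v => //.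
Qed.

End Generic.

Import numFieldNormedType.Exports.

Section RealLB.
Variables (R : realType) (m : nat) (M : 'rV[R]_m -> R).
Hypothesis M0 : forall v, M v = 0 -> v = 0.
Hypothesis MZ : forall (a : R) v, M (a *: v) = `|a| * M v.
Hypothesis MD : forall u v, M (u + v) <= M u + M v.

Lemma coord_le_norm (v : 'rV[R]_m) i : `|v ord0 i| <= `|v|.
Proof.
have /mapP[j Hj ->] : `|v ord0 i| \in [seq `|v x.1 x.2| | x : 'I_1 * 'I_m].
  by apply/mapP; exists (ord0, i) => //=; rewrite mem_enum.
by rewrite [leRHS]/Num.norm /= mx_normrE; apply/bigmax_geP; right => /=; exists j.
Qed.

Lemma M00 : M 0 = 0.
Proof. by rewrite -(scale0r (0 : 'rV[R]_m)) MZ normr0 mul0r. Qed.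

Lemma MN v : M (- v) = M v.
Proof. by rewrite -scaleN1r MZ normrN normr1 mul1r. Qed.

Lemma M_ge0 v : 0 <= M v.
Proof.
have : M 0 <= M v + M (- v) by rewrite -(subrr v) MD.
rewrite M00 MN; lra.
Qed.

Let L := \sum_(i < m) M (delta_mx 0 i) + 1.

Lemma L_gt0 : 0 < L.
Proof. by rewrite /L ltr_wpDl // sumr_ge0 // => i _; apply: M_ge0. Qed.

Lemma M_upper v : M v <= L * `|v|.
Proof.
rewrite {1}(row_sum_delta v).
have H : forall (r : seq 'I_m), M (\sum_(j <- r) v 0 j *: delta_mx 0 j) <=
    \sum_(j <- r) `|v|  * M (delta_mx 0 j).
  elim => [|j r IH]; first by rewrite !big_nil M00.
  rewrite !big_cons; apply: le_trans (MD _ _) _; apply: lerD => //.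
  by rewrite MZ ler_wpM2r ?M_ge0 // coord_le_norm.
apply: le_trans (H _) _; rewrite -mulr_sumr mulrC ler_wpM2r //.
by rewrite /L lerDl.
Qed.

Lemma M_cont : continuous M.
Proof.
move=> x; apply/(@cvgrPdist_lt _ _ _ (nbhs x) (nbhs_filter x)) => e e0.
have eL : 0 < e / L by rewrite divr_gt0 // L_gt0.
apply/nbhs_ballP; exists (e / L) => //= u; rewrite -ball_normE /= => Hu.
have h1 := MD u (x - u); rewrite subrKC in h1.
have h2 := MD x (u - x); rewrite subrKC -opprB MN in h2.
have h3 := M_upper (x - u).
have h4 : L * `|x - u| < e by rewrite -ltr_pdivlMl ?L_gt0 // mulrC.
rewrite ltr_norml; apply/andP; split; lra.
Qed.


Lemma coord_lb : exists2 c, 0 < c & forall v, c * `|v| <= M v.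
Proof.
case: (pselect (exists v : 'rV[R]_m, v != 0)) => [[w w0]|H]; last first.
  exists 1 => // v.
  have -> : v = 0 by apply: contra_notP H => hv; exists v; apply/eqP.
  by rewrite normr0 mulr0 M00.
pose A := [set v : 'rV[R]_m | `|v| = 1].
have A0 : A !=set0.
  exists (`|w|^-1 *: w); rewrite /A /= normrZ normrV ?unitfE ?normr_eq0 //.
  by rewrite normr_id mulVf // normr_eq0.
have cA : compact A.
  apply: bounded_closed_compact.
    exists 1; split => // y y1 v /= Av.
    by rewrite Av ltW.
  have -> : A = (fun v : 'rV[R]_m => `|v|) @^-1` [set (1 : R)] by [].
  apply: preimage_closed; last exact: closed_eq.
  by move=> v _; apply: norm_continuous.
have cM : {within A, continuous M}.
  by apply: continuous_subspaceT; exact: M_cont.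
have [v0 Av0 Hmin] := compact_EVT_min A0 cA cM.
rewrite inE /A /= in Av0.
have Mv0 : 0 < M v0.
  rewrite lt_neqAle M_ge0 andbT; apply/eqP => /esym /M0 hv.
  by move: Av0; rewrite hv normr0 => /eqP; rewrite eq_sym oner_eq0.
exists (M v0) => // v.
have [->|v0n] := eqVneq v 0; first by rewrite normr0 mulr0 M00.
have nv : 0 < `|v| by rewrite normr_gt0.
have := Hmin (`|v|^-1 *: v).
rewrite inE /A /= normrZ normrV ?unitfE ?normr_eq0 // normr_id mulVf ?normr_eq0 //.
move=> /(_ erefl); rewrite MZ normrV ?unitfE ?normr_eq0 // normr_id.
by rewrite ler_pdivlMl // mulrC.
Qed.

End RealLB.

Section Cplx.
Variables (R : realType) (n : nat).
Local Open Scope complex_scope.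

Definition phi (w : 'rV[R]_(n + n)) : 'rV[R[i]]_n :=
  \row_j (w 0 (lshift n j) +i* w 0 (rshift n j)).

Lemma phiD u v : phi (u + v) = phi u + phi v.
Proof. by apply/rowP => j; rewrite !mxE [RHS]/GRing.add /=. Qed.

Lemma cz (a x y : R) : (a * x) +i* (a * y) = a%:C * (x +i* y).
Proof. by rewrite [RHS]/GRing.mul /= !mul0r subr0 addr0. Qed.

Lemma phiZ (a : R) u : phi (a *: u) = (a%:C) *: phi u.
Proof. by apply/rowP => j; rewrite !mxE cz. Qed.

Lemma phi_inj0 w : phi w = 0 -> w = 0.
Proof.
move=> /rowP H; apply/rowP => k; rewrite mxE.
case: (splitP k) => j Hj.
  have := H j; rewrite !mxE => -[+ _].
  by have -> : k = lshift n j by apply/val_inj.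
have := H j; rewrite !mxE => -[_].
by have -> : k = rshift n j by apply/val_inj.
Qed.

Lemma normc_real (a : R) : Normc.normc (a%:C) = `|a|.
Proof.
change (Num.sqrt (a ^+ 2 + 0 ^+ 2) = `|a|).
by rewrite expr0n addr0 sqrtr_sqr.
Qed.

Lemma normc_le (a b : R) : Normc.normc (a +i* b) <= `|a| + `|b|.
Proof.
change (Num.sqrt (a ^+ 2 + b ^+ 2) <= `|a| + `|b|).
apply: (@le_trans _ _ (Num.sqrt ((`|a| + `|b|) ^+ 2))); last first.
  by rewrite sqrtr_sqr ger0_norm // addr_ge0.
apply: ler_wsqrtr.
rewrite sqrrD (real_normK (num_real a)) (real_normK (num_real b)).
have := mulr_ge0 (normr_ge0 a) (normr_ge0 b).
lra.
Qed.

End Cplx.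


Lemma coordb_R (R : realType) (n : nat) (N : 'rV[R]_n -> R) :
  is_norm (fun a : R => `|a|) N ->
  exists2 c, 0 < c & forall (v : 'rV[R]_n) i, c * `|v ord0 i| <= N v.
Proof.
case=> N0' NZ ND.
have [c c0 Hc] := @coord_lb R n N N0' NZ ND.
exists c => // v i; apply: le_trans (Hc v).
by apply: ler_wpM2l; [exact: ltW | exact: (@coord_le_norm R n v i)].
Qed.

Lemma coordb_C (R : realType) (n : nat) (N : 'rV[R[i]]_n -> R) :
  is_norm (@Normc.normc R) N ->
  exists2 c, 0 < c & forall (v : 'rV[R[i]]_n) i, c * Normc.normc (v ord0 i) <= N v.
Proof.
case=> N0' NZ ND.
pose M (w : 'rV[R]_(n + n)) := N (@phi R n w).
have M0 : forall w, M w = 0 -> w = 0 by move=> w /N0' /(@phi_inj0 R n).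
have MZ : forall (a : R) w, M (a *: w) = `|a| * M w.
  by move=> a w; rewrite /M (@phiZ R n) NZ (@normc_real R).
have MD : forall u w, M (u + w) <= M u + M w by move=> u w; rewrite /M (@phiD R n) ND.
have [c c0 Hc] := @coord_lb R (n + n) M M0 MZ MD.
exists (c / 2); first by rewrite divr_gt0.
move=> v i.
pose w : 'rV[R]_(n + n) :=
  row_mx (\row_j complex.Re (v 0 j)) (\row_j complex.Im (v 0 j)).
have pw : @phi R n w = v.
  apply/rowP => j; rewrite /phi mxE /w row_mxEl row_mxEr !mxE.
  by case: (v 0 j).
apply: le_trans (_ : c * `|w| <= N v); last by rewrite -pw; exact: Hc.
have h1 : Normc.normc (v ord0 i) <= `|w ord0 (lshift n i)| + `|w ord0 (rshift n i)|.
  rewrite /w row_mxEl row_mxEr !mxE.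
  by case: (v ord0 i) => a b; exact: (@normc_le R).
have h2 := @coord_le_norm R (n + n) w (lshift n i).
have h3 := @coord_le_norm R (n + n) w (rshift n i).
have h4 : 0 <= Normc.normc (v ord0 i).
  by case: (v ord0 i) => a b; exact: sqrtr_ge0.
nra.
Qed.

Theorem mainTheorem7 (R : realType) (n : nat) :
  claim (fun a : R => `|a|) n /\ claim (@Normc.normc R) n.
Proof.
split => N HN eps tau e0 t0 z mu x.
  apply: (@main_gen R _ (fun a : R => `|a|) n) => //.
  - by move=> a b; rewrite normrM.
  - by move=> a b; rewrite ler_normD.
  - by move=> a; rewrite normrN.
  - by rewrite normr0.
  - by rewrite normr1.
  - exact: coordb_R.
apply: (@main_gen R _ (@Normc.normc R) n) => //.
- by move=> a b; rewrite Normc.normcM.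
- by move=> a b; rewrite (@le_normcD R).
- by move=> a; exact: (@normcN R a).
- by rewrite Normc.normc0.
- by rewrite Normc.normc1.
- exact: coordb_C.
Qed.
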